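(* In the setting of the context, for every $n\in\mathbb Z$, $$\psi_n=\int_0^{2\pi}\phi(\theta)A_n(\theta)\frac{d\theta}{2\pi},\qquad\psi^*_n=\int_0^{2\pi}\phi^*(\theta)A^*_n(\theta)\frac{d\theta}{2\pi},$$ where $$A_n(\theta)=\frac{e^{-in\theta}}{C_n\prod_{j\le n-1}(1+S_je^{-i\theta})\prod_{j\ge n+1}(1-S_je^{i\theta})}\Big\{\frac{1}{1+S_ne^{-i\theta}}+\frac{1}{1-S_ne^{i\theta}}-1\Big\},$$ $$A^*_n(\theta)=\frac{e^{in\theta}}{C_n\prod_{j\le n-1}(1-S_je^{i\theta})\prod_{j\ge n+1}(1+S_je^{-i\theta})}\Big\{\frac{1}{1+S_ne^{-i\theta}}+\frac{1}{1-S_ne^{i\theta}}-1\Big\}.$$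
   Context: Let $\psi_n,\psi^*_n$ ($n\in\mathbb Z$) be operators (formal symbols), let $\gamma_n\ge0$ with only finitely many nonzero, $S_n=\sinh\gamma_n<1$, $C_n=\cosh\gamma_n$, and define the formal linear combinations $\phi(\theta)=\sum_nC_ne^{in\theta}\prod_{j\le n-1}(1+S_je^{-i\theta})\prod_{j\ge n+1}(1-S_je^{i\theta})\psi_n$ and $\phi^*(\theta)=\sum_nC_ne^{-in\theta}\prod_{j\le n-1}(1-S_je^{i\theta})\prod_{j\ge n+1}(1+S_je^{-i\theta})\psi^*_n$. The integrals are taken coefficientwise in the $\psi_k$ (resp. $\psi^*_k$). *)

(* Defs.v *)
From Stdlib Require Export Reals ZArith.
From Coquelicot Require Export Coquelicot.

Definition eix (x : R) : C := (cos x, sin x).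

Fixpoint cprod (m : nat) (a : Z) (f : Z -> C) : C :=
  match m with
  | O => RtoC 1
  | S m' => Cmult (f a) (cprod m' (a + 1)%Z f)
  end.

(* prod_{a <= j <= b} f j  (empty product = 1 if b < a) *)
Definition prodZ (a b : Z) (f : Z -> C) : C := cprod (Z.to_nat (b - a + 1)) a f.

Section Defs.
(* N : a bound on the support of gamma (gamma j = 0 whenever |j| > N), so that
   the infinite products over j <= n-1 and j >= n+1 reduce to j in [-N, n-1]
   and [n+1, N] respectively (all other factors equal 1). *)
Variables (N : Z) (gamma : Z -> R).

Definition Sg (j : Z) : R := sinh (gamma j).
Definition Cg (j : Z) : R := cosh (gamma j).

Definition PlowP (n : Z) (th : R) : C :=
  prodZ (- N) (n - 1) (fun j => Cplus (RtoC 1) (Cmult (RtoC (Sg j)) (eix (- th)))).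
Definition PhighM (n : Z) (th : R) : C :=
  prodZ (n + 1) N (fun j => Cminus (RtoC 1) (Cmult (RtoC (Sg j)) (eix th))).
Definition PlowM (n : Z) (th : R) : C :=
  prodZ (- N) (n - 1) (fun j => Cminus (RtoC 1) (Cmult (RtoC (Sg j)) (eix th))).
Definition PhighP (n : Z) (th : R) : C :=
  prodZ (n + 1) N (fun j => Cplus (RtoC 1) (Cmult (RtoC (Sg j)) (eix (- th)))).

(* coefficient of psi_k in phi(theta) *)
Definition phi_coef (k : Z) (th : R) : C :=
  Cmult (Cmult (Cmult (RtoC (Cg k)) (eix (IZR k * th))) (PlowP k th)) (PhighM k th).
(* coefficient of psi*_k in phi*(theta) *)
Definition phistar_coef (k : Z) (th : R) : C :=
  Cmult (Cmult (Cmult (RtoC (Cg k)) (eix (- (IZR k * th)))) (PlowM k th)) (PhighP k th).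

Definition brace (n : Z) (th : R) : C :=
  Cminus (Cplus (Cinv (Cplus (RtoC 1) (Cmult (RtoC (Sg n)) (eix (- th)))))
                (Cinv (Cminus (RtoC 1) (Cmult (RtoC (Sg n)) (eix th)))))
         (RtoC 1).

Definition A_n (n : Z) (th : R) : C :=
  Cmult (Cdiv (eix (- (IZR n * th)))
              (Cmult (Cmult (RtoC (Cg n)) (PlowP n th)) (PhighM n th)))
        (brace n th).

Definition Astar_n (n : Z) (th : R) : C :=
  Cmult (Cdiv (eix (IZR n * th))
              (Cmult (Cmult (RtoC (Cg n)) (PlowM n th)) (PhighP n th)))
        (brace n th).
End Defs.

(* Main.v *)
Require Import Defs.
From Stdlib Require Import Reals ZArith.
From Coquelicot Require Import Coquelicot.
From Stdlib Require Import Lra Lia FunctionalExtensionality.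


Definition ctC (f : R -> C) := forall x, continuous f x.

Lemma ctC_intro (f : R -> C) (x : R) :
  continuity_pt (fun t => fst (f t)) x -> continuity_pt (fun t => snd (f t)) x -> continuous f x.
Proof.
intros H1 H2. apply continuity_pt_filterlim in H1. apply continuity_pt_filterlim in H2.
apply (continuous_ext (fun t => (fst (f t), snd (f t)))).
{ intros t. destruct (f t); reflexivity. }
apply (continuous_comp_2 (fun t => fst (f t)) (fun t => snd (f t)) (@pair R R)); auto.
apply (continuous_ext (fun p => p)). { intros [a b]; reflexivity. }
apply continuous_id.
Qed.
Lemma ctC_elim (f : R -> C) (x : R) : continuous f x ->
  continuity_pt (fun t => fst (f t)) x /\ continuity_pt (fun t => snd (f t)) x.
Proof.
intros H. split; apply continuity_pt_filterlim.
- apply (continuous_comp f fst). exact H. destruct (f x). apply continuous_fst.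
- apply (continuous_comp f snd). exact H. destruct (f x). apply continuous_snd.
Qed.

Lemma ctC_const (c : C) : ctC (fun _ => c).
Proof. intro x. apply continuous_const. Qed.

Lemma ctC_eix (s : R) : ctC (fun t => eix (s * t)).
Proof.
intro x. apply ctC_intro; simpl.
- apply (continuity_pt_comp (fun t => s * t) cos). 
  apply continuity_pt_mult. apply continuity_pt_const. intros a b; auto. apply derivable_continuous_pt; apply derivable_pt_id.
  apply derivable_continuous_pt; apply derivable_pt_cos.
- apply (continuity_pt_comp (fun t => s * t) sin). 
  apply continuity_pt_mult. apply continuity_pt_const. intros a b; auto. apply derivable_continuous_pt; apply derivable_pt_id.
  apply derivable_continuous_pt; apply derivable_pt_sin.
Qed.

Lemma ctC_plus f g : ctC f -> ctC g -> ctC (fun t => (f t + g t)%C).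
Proof.
intros Hf Hg x. destruct (ctC_elim f x (Hf x)) as [F1 F2].
destruct (ctC_elim g x (Hg x)) as [G1 G2].
apply ctC_intro.
- eapply continuity_pt_ext. 2: apply (continuity_pt_plus _ _ x F1 G1).
  intro t. simpl. reflexivity.
- eapply continuity_pt_ext. 2: apply (continuity_pt_plus _ _ x F2 G2).
  intro t. simpl. reflexivity.
Qed.

Lemma ctC_mult f g : ctC f -> ctC g -> ctC (fun t => (f t * g t)%C).
Proof.
intros Hf Hg x. destruct (ctC_elim f x (Hf x)) as [F1 F2].
destruct (ctC_elim g x (Hg x)) as [G1 G2].
apply ctC_intro.
- eapply continuity_pt_ext. 2: apply (continuity_pt_minus _ _ x (continuity_pt_mult _ _ x F1 G1) (continuity_pt_mult _ _ x F2 G2)).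
  intro t. simpl. reflexivity.
- eapply continuity_pt_ext. 2: apply (continuity_pt_plus _ _ x (continuity_pt_mult _ _ x F1 G2) (continuity_pt_mult _ _ x F2 G1)).
  intro t. simpl. reflexivity.
Qed.

Lemma ctC_opp f : ctC f -> ctC (fun t => (- f t)%C).
Proof.
intros Hf x. destruct (ctC_elim f x (Hf x)) as [F1 F2].
apply ctC_intro.
- eapply continuity_pt_ext. 2: apply (continuity_pt_opp _ x F1). intro t; reflexivity.
- eapply continuity_pt_ext. 2: apply (continuity_pt_opp _ x F2). intro t; reflexivity.
Qed.

Lemma ctC_inv f : ctC f -> (forall t, f t <> 0%C) -> ctC (fun t => (/ f t)%C).
Proof.
intros Hf Hnz x. destruct (ctC_elim f x (Hf x)) as [F1 F2].
assert (D : fst (f x) ^ 2 + snd (f x) ^ 2 <> 0).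
{ intro E. apply (Hnz x). apply Cmod_eq_0. unfold Cmod. rewrite E. apply sqrt_0. }
assert (DC : continuity_pt (fun t => fst (f t) ^ 2 + snd (f t) ^ 2) x).
{ apply continuity_pt_plus; apply continuity_pt_mult; auto; apply continuity_pt_mult; auto; apply continuity_pt_const; intros a b; auto. }
apply ctC_intro.
- eapply continuity_pt_ext. 2: apply (continuity_pt_div _ _ x F1 DC D).
  intro t. unfold div_fct, plus_fct, mult_fct, opp_fct; simpl. unfold Rdiv. ring.
- eapply continuity_pt_ext. 2: apply (continuity_pt_div _ _ x (continuity_pt_opp _ x F2) DC D).
  intro t. unfold div_fct, plus_fct, mult_fct, opp_fct; simpl. unfold Rdiv. ring.
Qed.

Lemma ctC_div f g : ctC f -> ctC g -> (forall t, g t <> 0%C) -> ctC (fun t => (f t / g t)%C).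
Proof. intros. apply ctC_mult; auto. apply ctC_inv; auto. Qed.

Lemma ctC_pow f m : ctC f -> ctC (fun t => Cpow (f t) m).
Proof. intros Hf. induction m; simpl. apply ctC_const. apply ctC_mult; auto. Qed.


Notation isC := (is_RInt (V:=C_R_CompleteNormedModule)).

Lemma plus_C (x y : C) : @plus C_R_CompleteNormedModule x y = (x + y)%C.
Proof. destruct x, y; reflexivity. Qed.
Lemma scal_C (r : R) (x : C) : @scal R_AbsRing C_R_CompleteNormedModule r x = (RtoC r * x)%C.
Proof. destruct x as [a b]. unfold scal; simpl. unfold prod_scal, Cmult, RtoC; simpl. unfold scal; simpl; unfold mult; simpl. apply injective_projections; simpl; ring. Qed.

Lemma isC_plus f g a b l1 l2 : isC f a b l1 -> isC g a b l2 -> isC (fun t => (f t + g t)%C) a b (l1 + l2)%C.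
Proof.
intros H1 H2. rewrite <- plus_C. eapply is_RInt_ext. 2: apply (is_RInt_plus _ _ _ _ _ _ H1 H2).
intros; apply plus_C.
Qed.
Lemma isC_scal f a b l r : isC f a b l -> isC (fun t => (RtoC r * f t)%C) a b (RtoC r * l)%C.
Proof.
intros H. rewrite <- scal_C. eapply is_RInt_ext. 2: apply (is_RInt_scal _ _ _ _ _ H).
intros; apply scal_C.
Qed.
Lemma isC_ex f a b : ctC f -> isC f a b (RInt (V:=C_R_CompleteNormedModule) f a b).
Proof. intros H. apply RInt_correct. apply ex_RInt_continuous. intros; apply H. Qed.

Lemma eix_add a b : eix (a + b) = (eix a * eix b)%C.
Proof. unfold eix. rewrite cos_plus, sin_plus. apply injective_projections; simpl; ring. Qed.
Lemma eix_nz t : eix t <> 0%C.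
Proof. intro H. unfold eix in H. injection H. intros. pose proof (sin2_cos2 t). rewrite H0, H1 in H2. unfold Rsqr in H2. lra. Qed.
Lemma eix_opp t : eix (- t) = (/ eix t)%C.
Proof.
assert (E : (eix t * eix (-t))%C = 1%C). { rewrite <- eix_add. replace (t + - t) with 0 by ring. unfold eix. rewrite cos_0, sin_0. reflexivity. }
rewrite <- (Cmult_1_l (/ eix t)). rewrite <- E. field. apply eix_nz.
Qed.
Lemma Cmod_eix t : Cmod (eix t) = 1.
Proof. unfold Cmod, eix; simpl. pose proof (sin2_cos2 t) as H. unfold Rsqr in H. replace (cos t * (cos t * 1) + sin t * (sin t * 1)) with 1 by lra. apply sqrt_1. Qed.
Lemma Cpow_eix t j : Cpow (eix t) j = eix (INR j * t).
Proof.
induction j. simpl. unfold eix. rewrite Rmult_0_l, cos_0, sin_0. reflexivity.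
simpl Cpow. rewrite IHj, <- eix_add. f_equal. rewrite S_INR. ring.
Qed.

Lemma is_RInt_eq_l {V : NormedModule R_AbsRing} (f : R -> V) a b l l' : is_RInt f a b l -> l = l' -> is_RInt f a b l'.
Proof. intros H <-; exact H. Qed.

Lemma int_eix_lin (c : R) (j : nat) : (1 <= j)%nat -> (c = INR j \/ c = - INR j) ->
  isC (fun t => eix (c * t)) 0 (2 * PI) (RtoC 0).
Proof.
intros Hj Hc.
assert (Cnz : c <> 0). { assert (0 < INR j) by (apply lt_0_INR; lia). lra. }
assert (Hcos : cos (c * (2 * PI)) = 1).
{ destruct Hc as [-> | ->].
  - pose proof (cos_period 0 j). rewrite Rplus_0_l, cos_0 in H. rewrite <- H. f_equal. ring.
  - pose proof (cos_period 0 j). rewrite Rplus_0_l, cos_0 in H. rewrite <- H.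
    replace (- INR j * (2 * PI)) with (- (2 * INR j * PI)) by ring. apply cos_neg. }
assert (Hsin : sin (c * (2 * PI)) = 0).
{ destruct Hc as [-> | ->].
  - pose proof (sin_period 0 j). rewrite Rplus_0_l, sin_0 in H. rewrite <- H. f_equal. ring.
  - pose proof (sin_period 0 j). rewrite Rplus_0_l, sin_0 in H.
    replace (- INR j * (2 * PI)) with (- (2 * INR j * PI)) by ring. rewrite sin_neg, H. ring. }
apply (is_RInt_fct_extend_pair (U:=R_NormedModule) (V:=R_NormedModule) (fun t => eix (c * t))); simpl.
- pose proof (is_RInt_derive (V:=R_CompleteNormedModule) (fun t => sin (c * t) / c) (fun t => cos (c * t)) 0 (2*PI)) as H.
  eapply is_RInt_eq_l. apply H.
  3: { cbv beta. rewrite Hsin, Rmult_0_r, sin_0. unfold minus, plus, opp; simpl. field. auto. }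
  + intros x _. auto_derive. auto. field. auto.
  + intros x _. apply continuity_pt_filterlim. apply (continuity_pt_comp (fun t => c * t) cos).
    apply continuity_pt_mult. apply continuity_pt_const. intros a b; auto. apply derivable_continuous_pt; apply derivable_pt_id.
    apply derivable_continuous_pt; apply derivable_pt_cos.
- pose proof (is_RInt_derive (V:=R_CompleteNormedModule) (fun t => - cos (c * t) / c) (fun t => sin (c * t)) 0 (2*PI)) as H.
  eapply is_RInt_eq_l. apply H.
  3: { cbv beta. rewrite Hcos, Rmult_0_r, cos_0. unfold minus, plus, opp; simpl. field. auto. }
  + intros x _. auto_derive. auto. field. auto.
  + intros x _. apply continuity_pt_filterlim. apply (continuity_pt_comp (fun t => c * t) sin).
    apply continuity_pt_mult. apply continuity_pt_const. intros a b; auto. apply derivable_continuous_pt; apply derivable_pt_id.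
    apply derivable_continuous_pt; apply derivable_pt_sin.
Qed.

Lemma norm_C_R (x : C) : @norm R_AbsRing C_R_CompleteNormedModule x = Cmod x.
Proof.
destruct x as [a b]. unfold norm; simpl. unfold prod_norm, Cmod; simpl. unfold norm; simpl. unfold abs; simpl.
rewrite !Rmult_1_r, <- !Rabs_mult, !Rabs_pos_eq by apply Rle_0_sqr. reflexivity.
Qed.


Ltac ceq := match goal with |- ?a = ?b => change (@eq C a b) end.

Definition good (e : R -> C) := ctC e /\ (forall t, Cmod (e t) = 1) /\
  forall j, (1 <= j)%nat -> isC (fun t => Cpow (e t) j) 0 (2*PI) (RtoC 0).
Definition Q (e : R -> C) (g : R -> C) := ctC g /\
  forall m, isC (fun t => (g t * Cpow (e t) m)%C) 0 (2*PI) (RtoC 0).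

Lemma good_z : good (fun t => eix t).
Proof.
split; [|split].
- intro x. apply (continuous_ext (fun t => eix (1 * t))). intros; rewrite Rmult_1_l; auto. apply ctC_eix.
- intros; apply Cmod_eix.
- intros j Hj. eapply is_RInt_ext. 2: apply (int_eix_lin (INR j) j Hj). intros; rewrite Cpow_eix; auto. auto.
Qed.
Lemma good_w : good (fun t => eix (- t)).
Proof.
split; [|split].
- intro x. apply (continuous_ext (fun t => eix (-1 * t))). intros; f_equal; ring. apply ctC_eix.
- intros; apply Cmod_eix.
- intros j Hj. eapply is_RInt_ext. 2: apply (int_eix_lin (- INR j) j Hj). intros; rewrite Cpow_eix; f_equal; ring. auto.
Qed.

Lemma Q_ext e g h : Q e g -> (forall t, g t = h t) -> Q e h.
Proof. intros H E. replace h with g; auto. apply functional_extensionality; auto. Qed.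

Lemma Q_base e : good e -> Q e e.
Proof.
intros (Hc & Hm & Hi). split; auto. intros m.
apply (Hi (S m)). lia.
Qed.

Lemma Q_scal e g r : Q e g -> Q e (fun t => (RtoC r * g t)%C).
Proof.
intros [Hc Hi]. split. apply ctC_mult; auto. apply ctC_const.
intros m. eapply is_RInt_eq_l. eapply is_RInt_ext. 2: apply (isC_scal _ _ _ _ r (Hi m)).
intros x _. cbv beta. ceq; ring. ceq; ring.
Qed.

Lemma Q_lin e g a : good e -> Q e g -> Q e (fun t => (g t * (e t + RtoC a))%C).
Proof.
intros (He & Hm & Hp) [Hc Hi]. split.
apply ctC_mult; auto. apply ctC_plus; auto. apply ctC_const.
intros m. eapply is_RInt_eq_l. eapply is_RInt_ext.
2: apply (isC_plus _ _ _ _ _ _ (Hi (S m)) (isC_scal _ _ _ _ a (Hi m))).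
intros x _. cbv beta. simpl Cpow. ceq. ring. ceq. ring.
Qed.

Lemma nz_lin e a t : good e -> Rabs a < 1 -> (1 + RtoC a * e t)%C <> 0%C.
Proof.
intros (He & Hm & Hp) Ha E.
assert (E2 : (RtoC a * e t)%C = (- 1)%C).
{ rewrite <- (Cplus_0_l (- 1)%C). rewrite <- E. ring. }
apply (f_equal Cmod) in E2. rewrite Cmod_mult, Hm in E2. rewrite ?Cmod_opp, ?Cmod_m1, ?Cmod_1, ?Cmod_R, ?Rabs_Ropp, ?Rabs_R1 in E2. replace (Rabs (-1)) with 1 in E2 by (rewrite Rabs_left; lra). lra.
Qed.

Lemma C_sol (x y : C) : (x + y)%C = 0%C -> x = (- y)%C.
Proof. intros H. rewrite <- (Cplus_0_r (- y)%C), <- H. ring. Qed.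

Lemma Q_div e g a : good e -> Rabs a < 1 -> Q e g -> Q e (fun t => (g t / (1 + RtoC a * e t))%C).
Proof.
intros Hg Ha [Hc Hi].
pose proof Hg as (He & Hm & Hp).
assert (nz : forall t, (1 + RtoC a * e t)%C <> 0%C) by (intros; apply nz_lin; auto).
set (u := fun t => (g t / (1 + RtoC a * e t))%C).
assert (Hu : ctC u). { apply ctC_div; auto. apply ctC_plus. apply ctC_const. apply ctC_mult; auto. apply ctC_const. }
split; [exact Hu|].
set (c := fun m => RInt (V:=C_R_CompleteNormedModule) (fun t => (u t * Cpow (e t) m)%C) 0 (2*PI)).
assert (Hcm : forall m, isC (fun t => (u t * Cpow (e t) m)%C) 0 (2*PI) (c m)).
{ intros m. apply isC_ex. apply ctC_mult; auto. apply ctC_pow; auto. }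
assert (rel : forall m, (c m + RtoC a * c (S m))%C = 0%C).
{ intros m. pose proof (isC_plus _ _ _ _ _ _ (Hcm m) (isC_scal _ _ _ _ a (Hcm (S m)))) as H1.
  assert (H2 : isC (fun t => (u t * Cpow (e t) m + RtoC a * (u t * Cpow (e t) (S m)))%C) 0 (2*PI) (RtoC 0)).
  { eapply is_RInt_ext. 2: apply (Hi m). intros t _. unfold u. simpl Cpow. ceq. field. auto. }
  apply is_RInt_unique in H1. apply is_RInt_unique in H2. rewrite <- H1, <- H2. reflexivity. }
set (K := RInt (fun t => Cmod (u t)) 0 (2*PI)).
assert (HK : is_RInt (fun t => Cmod (u t)) 0 (2*PI) K).
{ apply (RInt_correct (V:=R_CompleteNormedModule)). apply (ex_RInt_continuous (V:=R_CompleteNormedModule)). intros z _.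
  apply (continuous_ext (fun t => @norm R_AbsRing C_R_CompleteNormedModule (u t))). intros; apply norm_C_R.
  apply (continuous_comp u (@norm R_AbsRing C_R_CompleteNormedModule)). apply Hu. apply (filterlim_norm (K:=R_AbsRing) (V:=C_R_CompleteNormedModule)). }
assert (bnd : forall m, Cmod (c m) <= K).
{ intros m. rewrite <- norm_C_R. apply (norm_RInt_le (fun t => (u t * Cpow (e t) m)%C) (fun t => Cmod (u t)) 0 (2*PI) _ K). 
  pose proof PI_RGT_0; lra.
  2: apply Hcm. 2: apply HK.
  intros x _. rewrite norm_C_R. rewrite Cmod_mult, Cmod_pow, Hm, pow1. lra. }
assert (bnd2 : forall j m, Cmod (c m) <= Rabs a ^ j * K).
{ induction j; intros m. simpl. rewrite Rmult_1_l. apply bnd.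
  assert (E : c m = (- (RtoC a * c (S m)))%C).
  { apply C_sol. apply rel. }
  rewrite E, Cmod_opp, Cmod_mult, Cmod_R. simpl. rewrite Rmult_assoc.
  apply Rmult_le_compat_l. apply Rabs_pos. apply IHj. }
assert (z : forall m, c m = RtoC 0).
{ intros m. apply Cmod_eq_0. destruct (Req_dec (Cmod (c m)) 0) as [E|E]; auto. exfalso.
  assert (P : 0 < Cmod (c m)) by (pose proof (Cmod_ge_0 (c m)); lra).
  assert (K0 : 0 <= K) by (pose proof (bnd m); pose proof (Cmod_ge_0 (c m)); lra).
  assert (Ha' : Rabs (Rabs a) < 1) by (rewrite Rabs_Rabsolu; auto).
  destruct (pow_lt_1_zero (Rabs a) Ha' (Cmod (c m) / (K + 1))) as [N HN].
  apply Rdiv_lt_0_compat; lra.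
  specialize (HN N (le_n _)). rewrite Rabs_pos_eq in HN by (apply pow_le; apply Rabs_pos).
  specialize (bnd2 N m).
  assert (Rabs a ^ N * (K + 1) < Cmod (c m)).
  { apply (Rmult_lt_compat_r (K+1)) in HN; [|lra]. unfold Rdiv in HN. rewrite Rmult_assoc, Rinv_l, Rmult_1_r in HN by lra. lra. }
  assert (0 <= Rabs a ^ N) by (apply pow_le; apply Rabs_pos).
  nra. }
intros m. rewrite <- (z m). apply Hcm.
Qed.


Lemma cprod_S_r m a (f : Z -> C) : cprod (S m) a f = (cprod m a f * f (a + Z.of_nat m)%Z)%C.
Proof.
revert a. induction m; intros a.
- simpl. rewrite Z.add_0_r. ring.
- change (cprod (S (S m)) a f) with (f a * cprod (S m) (a + 1)%Z f)%C.
  rewrite IHm. simpl cprod.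
  replace (a + 1 + Z.of_nat m)%Z with (a + Z.of_nat (S m))%Z by lia. ring.
Qed.

Lemma to_nat_np z : (z <= 0)%Z -> Z.to_nat z = O.
Proof. destruct z; simpl; auto; lia. Qed.

Lemma prodZ_r a b (f : Z -> C) : (a <= b)%Z \/ f b = RtoC 1 -> prodZ a b f = (prodZ a (b - 1) f * f b)%C.
Proof.
unfold prodZ. intros [H|H].
- replace (Z.to_nat (b - a + 1)) with (S (Z.to_nat (b - 1 - a + 1))) by (rewrite <- Z2Nat.inj_succ by lia; f_equal; lia).
  rewrite cprod_S_r. f_equal. replace (a + Z.of_nat (Z.to_nat (b - 1 - a + 1)))%Z with b; [reflexivity|]. rewrite Z2Nat.id by lia; lia.
- destruct (Z_le_gt_dec a b) as [H'|H'].
  + replace (Z.to_nat (b - a + 1)) with (S (Z.to_nat (b - 1 - a + 1))) by (rewrite <- Z2Nat.inj_succ by lia; f_equal; lia).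
    rewrite cprod_S_r. f_equal. replace (a + Z.of_nat (Z.to_nat (b - 1 - a + 1)))%Z with b; [reflexivity|]. rewrite Z2Nat.id by lia; lia.
  + replace (Z.to_nat (b - a + 1)) with O by (rewrite to_nat_np by lia; reflexivity). replace (Z.to_nat (b - 1 - a + 1)) with O by (rewrite to_nat_np by lia; reflexivity).
    simpl. rewrite H. ring.
Qed.

Lemma prodZ_l a b (f : Z -> C) : (a <= b)%Z \/ f a = RtoC 1 -> prodZ a b f = (f a * prodZ (a + 1) b f)%C.
Proof.
unfold prodZ. intros H.
destruct (Z_le_gt_dec a b) as [H'|H'].
- replace (Z.to_nat (b - a + 1)) with (S (Z.to_nat (b - (a + 1) + 1))) by (rewrite <- Z2Nat.inj_succ by lia; f_equal; lia). reflexivity.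
- destruct H as [H|H]; [lia|].
  replace (Z.to_nat (b - a + 1)) with O by (rewrite to_nat_np by lia; reflexivity). replace (Z.to_nat (b - (a + 1) + 1)) with O by (rewrite to_nat_np by lia; reflexivity).
  simpl. rewrite H. ring.
Qed.

Lemma cprod_nz m a (f : Z -> C) : (forall j, f j <> RtoC 0) -> cprod m a f <> RtoC 0.
Proof.
intros H. revert a. induction m; intros a; simpl.
- intro E. apply (f_equal fst) in E. simpl in E. lra.
- apply Cmult_neq_0; [apply H | apply IHm].
Qed.

Lemma prodZ_nz a b (f : Z -> C) : (forall j, f j <> RtoC 0) -> prodZ a b f <> RtoC 0.
Proof. intros; apply cprod_nz; auto. Qed.

Lemma nz_gen (c : C) (s : R) : Cmod c = 1 -> Rabs s < 1 -> (c + RtoC s)%C <> 0%C.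
Proof.
intros Hc Hs E. assert (c = (- RtoC s)%C). { rewrite <- (Cplus_0_r (- RtoC s)%C), <- E. ring. }
subst c. rewrite Cmod_opp, Cmod_R in Hc. lra.
Qed.
Lemma nz_gen2 (c : C) (s : R) : Cmod c = 1 -> Rabs s < 1 -> (1 + RtoC s * c)%C <> 0%C.
Proof.
intros Hc Hs E. assert ((RtoC s * c)%C = (- 1)%C). { rewrite <- (Cplus_0_l (- 1)%C), <- E. ring. }
apply (f_equal Cmod) in H. rewrite Cmod_mult, Hc, Cmod_R in H.
replace (Cmod (-1)%C) with 1 in H. lra.
unfold Cmod. simpl. replace ((-1) * ((-1) * 1) + 0 * (0 * 1)) with 1 by ring. now rewrite sqrt_1.
Qed.
Lemma Cmod_inv_eix t : Cmod (/ eix t)%C = 1.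
Proof. rewrite Cmod_inv by apply eix_nz. rewrite Cmod_eix. apply Rinv_1. Qed.

Lemma Sbound gamma (Hpos : forall j, 0 <= gamma j) (HS : forall j, sinh (gamma j) < 1) j : Rabs (Sg gamma j) < 1.
Proof.
unfold Sg. pose proof (Hpos j). pose proof (HS j).
assert (0 <= sinh (gamma j)).
{ destruct H. apply Rlt_le. rewrite <- sinh_0. apply sinh_lt; auto. rewrite <- H, sinh_0. lra. }
rewrite Rabs_pos_eq; lra.
Qed.
Lemma Cg_pos gamma j : 0 < Cg gamma j.
Proof. unfold Cg, cosh. pose proof (exp_pos (gamma j)). pose proof (exp_pos (- gamma j)). lra. Qed.
Lemma Szero N gamma (Hsupp : forall j : Z, (N < Z.abs j)%Z -> gamma j = 0) j : (N < Z.abs j)%Z -> Sg gamma j = 0.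
Proof. intros H. unfold Sg. rewrite Hsupp by auto. apply sinh_0. Qed.


Definition Hz N gamma := forall j, (N < Z.abs j)%Z -> Sg gamma j = 0.
Definition Hb gamma := forall j, Rabs (Sg gamma j) < 1.

Lemma PlowP_succ N gamma (H : Hz N gamma) n th :
  PlowP N gamma (n + 1) th = (PlowP N gamma n th * (1 + RtoC (Sg gamma n) * eix (- th)))%C.
Proof.
unfold PlowP. replace (n + 1 - 1)%Z with n by ring. apply (prodZ_r _ _ (fun j => (1 + RtoC (Sg gamma j) * eix (- th))%C)).
destruct (Z_le_gt_dec (- N) n); [left; lia | right]. rewrite H by lia. ring.
Qed.
Lemma PlowM_succ N gamma (H : Hz N gamma) n th :
  PlowM N gamma (n + 1) th = (PlowM N gamma n th * (1 - RtoC (Sg gamma n) * eix th))%C.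
Proof.
unfold PlowM. replace (n + 1 - 1)%Z with n by ring. apply (prodZ_r _ _ (fun j => (1 - RtoC (Sg gamma j) * eix th)%C)).
destruct (Z_le_gt_dec (- N) n); [left; lia | right]. rewrite H by lia. ring.
Qed.
Lemma PhighM_pred N gamma (H : Hz N gamma) n th :
  PhighM N gamma n th = ((1 - RtoC (Sg gamma (n + 1)) * eix th) * PhighM N gamma (n + 1) th)%C.
Proof.
unfold PhighM. apply (prodZ_l _ _ (fun j => (1 - RtoC (Sg gamma j) * eix th)%C)).
destruct (Z_le_gt_dec (n + 1) N); [left; lia | right]. rewrite H by lia. ring.
Qed.
Lemma PhighP_pred N gamma (H : Hz N gamma) n th :
  PhighP N gamma n th = ((1 + RtoC (Sg gamma (n + 1)) * eix (- th)) * PhighP N gamma (n + 1) th)%C.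
Proof.
unfold PhighP. apply (prodZ_l _ _ (fun j => (1 + RtoC (Sg gamma j) * eix (- th))%C)).
destruct (Z_le_gt_dec (n + 1) N); [left; lia | right]. rewrite H by lia. ring.
Qed.

Lemma nzP gamma (B : Hb gamma) j th : (1 + RtoC (Sg gamma j) * eix (- th))%C <> RtoC 0.
Proof. apply nz_gen2; auto. apply Cmod_eix. Qed.
Lemma nzM gamma (B : Hb gamma) j th : (1 - RtoC (Sg gamma j) * eix th)%C <> RtoC 0.
Proof.
replace (1 - RtoC (Sg gamma j) * eix th)%C with (1 + RtoC (- Sg gamma j) * eix th)%C by (rewrite RtoC_opp; ring).
apply nz_gen2. apply Cmod_eix. rewrite Rabs_Ropp; auto.
Qed.

Lemma nzPlowP N gamma (B : Hb gamma) n th : PlowP N gamma n th <> RtoC 0.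
Proof. apply prodZ_nz. intros; apply nzP; auto. Qed.
Lemma nzPlowM N gamma (B : Hb gamma) n th : PlowM N gamma n th <> RtoC 0.
Proof. apply prodZ_nz. intros; apply nzM; auto. Qed.
Lemma nzPhighP N gamma (B : Hb gamma) n th : PhighP N gamma n th <> RtoC 0.
Proof. apply prodZ_nz. intros; apply nzP; auto. Qed.
Lemma nzPhighM N gamma (B : Hb gamma) n th : PhighM N gamma n th <> RtoC 0.
Proof. apply prodZ_nz. intros; apply nzM; auto. Qed.

Definition T N gamma k th := (eix (IZR k * th) * PlowP N gamma k th * PhighM N gamma k th)%C.
Definition Ts N gamma k th := (eix (- (IZR k * th)) * PlowM N gamma k th * PhighP N gamma k th)%C.

Lemma eix_succ k th : eix (IZR (k + 1) * th) = (eix (IZR k * th) * eix th)%C.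
Proof. rewrite <- eix_add. f_equal. rewrite plus_IZR. ring. Qed.
Lemma eix_succ' k th : eix (- (IZR (k + 1) * th)) = (eix (- (IZR k * th)) * eix (- th))%C.
Proof. rewrite <- eix_add. f_equal. rewrite plus_IZR. ring. Qed.

Ltac nzall := repeat split; match goal with |- ?X <> _ => match goal with H : ?Y <> _ |- _ => let E := fresh in intro E; apply H; transitivity X; [cbv beta; ring | exact E] end end.

Lemma R1 N gamma (H : Hz N gamma) (B : Hb gamma) k th :
  T N gamma (k + 1) th = (T N gamma k th * (eix th + RtoC (Sg gamma k)) / (1 + RtoC (- Sg gamma (k + 1)) * eix th))%C.
Proof.
unfold T. rewrite PlowP_succ, (PhighM_pred N gamma H k), eix_succ, eix_opp, RtoC_opp; auto.
pose proof (eix_nz th). pose proof (nzM gamma B (k+1) th).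
field. 
nzall.
Qed.


Ltac prepk gamma B k th :=
  pose proof (eix_nz th); pose proof (eix_nz (IZR k * th));
  pose proof (nz_gen (eix th) (Sg gamma k) (Cmod_eix th) (B k));
  pose proof (nz_gen (eix th) (Sg gamma (k+1)%Z) (Cmod_eix th) (B (k+1)%Z));
  pose proof (nzM gamma B k th); pose proof (nzM gamma B (k+1) th);
  pose proof (nzP gamma B k th); pose proof (nzP gamma B (k+1) th).

Ltac showg := match goal with |- ?g => idtac "G:" g end.

Lemma R2 N gamma (H : Hz N gamma) (B : Hb gamma) k th :
  T N gamma k th = (T N gamma (k + 1) th * (eix (- th) + RtoC (- Sg gamma (k + 1))) / (1 + RtoC (Sg gamma k) * eix (- th)))%C.
Proof.
unfold T. prepk gamma B k th.
rewrite PlowP_succ, (PhighM_pred N gamma H k), eix_succ, RtoC_opp; auto.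
repeat rewrite eix_opp in *.
field; nzall.
Qed.

Lemma R3 N gamma (H : Hz N gamma) (B : Hb gamma) k th :
  Ts N gamma (k + 1) th = (Ts N gamma k th * (eix (- th) + RtoC (- Sg gamma k)) / (1 + RtoC (Sg gamma (k + 1)) * eix (- th)))%C.
Proof.
unfold Ts. prepk gamma B k th.
rewrite PlowM_succ, (PhighP_pred N gamma H k), eix_succ', RtoC_opp; auto.
repeat rewrite eix_opp in *.
field; nzall.
Qed.

Lemma R4 N gamma (H : Hz N gamma) (B : Hb gamma) k th :
  Ts N gamma k th = (Ts N gamma (k + 1) th * (eix th + RtoC (Sg gamma (k + 1))) / (1 + RtoC (- Sg gamma k) * eix th))%C.
Proof.
unfold Ts. prepk gamma B k th.
rewrite PlowM_succ, (PhighP_pred N gamma H k), eix_succ', RtoC_opp; auto.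
repeat rewrite eix_opp in *.
field; nzall.
Qed.

Lemma RtoC_nz r : r <> 0 -> RtoC r <> RtoC 0.
Proof. intros H E. apply (f_equal fst) in E. simpl in E. lra. Qed.

Lemma diag N gamma (B : Hb gamma) n th :
  (T N gamma n th * A_n N gamma n th)%C = (brace gamma n th / RtoC (Cg gamma n))%C.
Proof.
unfold T, A_n. pose proof (eix_nz (IZR n * th)). pose proof (nzPlowP N gamma B n th).
pose proof (nzPhighM N gamma B n th). pose proof (RtoC_nz _ (Rgt_not_eq _ _ (Cg_pos gamma n))).
repeat rewrite eix_opp. field. nzall.
Qed.
Lemma diag_s N gamma (B : Hb gamma) n th :
  (Ts N gamma n th * Astar_n N gamma n th)%C = (brace gamma n th / RtoC (Cg gamma n))%C.
Proof.
unfold Ts, Astar_n. pose proof (eix_nz (IZR n * th)). pose proof (nzPlowM N gamma B n th).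
pose proof (nzPhighP N gamma B n th). pose proof (RtoC_nz _ (Rgt_not_eq _ _ (Cg_pos gamma n))).
repeat rewrite eix_opp. field. nzall.
Qed.

Lemma B1 gamma (B : Hb gamma) n th :
  (brace gamma n th * (eix (- th) + RtoC (- Sg gamma n)))%C =
  (RtoC (1 + Sg gamma n * Sg gamma n) * eix (- th) / (1 + RtoC (Sg gamma n) * eix (- th)))%C.
Proof.
unfold brace. prepk gamma B n th.
rewrite RtoC_opp, RtoC_plus, RtoC_mult. repeat rewrite eix_opp in *. field. nzall.
Qed.
Lemma B2 gamma (B : Hb gamma) n th :
  (brace gamma n th * (eix th + RtoC (Sg gamma n)))%C =
  (RtoC (1 + Sg gamma n * Sg gamma n) * eix th / (1 + RtoC (- Sg gamma n) * eix th))%C.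
Proof.
unfold brace. prepk gamma B n th.
rewrite RtoC_opp, RtoC_plus, RtoC_mult. repeat rewrite eix_opp in *. field. nzall.
Qed.

Lemma chain e (V : nat -> R -> C) (a b : nat -> R) (b0 b1 r : R) :
  good e -> (forall d, Rabs (b d) < 1) -> Rabs b0 < 1 -> Rabs b1 < 1 ->
  (forall th, V 0%nat th = (RtoC r * e th / (1 + RtoC b0 * e th) / (1 + RtoC b1 * e th))%C) ->
  (forall d th, V (S d) th = (V d th * (e th + RtoC (a d)) / (1 + RtoC (b d) * e th))%C) ->
  forall d, isC (V d) 0 (2*PI) (RtoC 0).
Proof.
intros Hg Hb Hb0 Hb1 H0 HS.
assert (Q e (V 0%nat)).
{ apply (Q_ext e (fun th => (RtoC r * e th / (1 + RtoC b0 * e th) / (1 + RtoC b1 * e th))%C)).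
  apply (Q_div e (fun th => (RtoC r * e th / (1 + RtoC b0 * e th))%C)); auto.
  apply (Q_div e (fun th => (RtoC r * e th)%C)); auto.
  apply Q_scal. apply Q_base; auto. intros; rewrite H0; reflexivity. }
assert (forall d, Q e (V d)).
{ induction d; auto.
  apply (Q_ext e (fun th => (V d th * (e th + RtoC (a d)) / (1 + RtoC (b d) * e th))%C)).
  apply (Q_div e (fun th => (V d th * (e th + RtoC (a d)))%C)); auto.
  apply Q_lin; auto. intros; rewrite HS; reflexivity. }
intros d. destruct (H1 d) as [_ Hi]. eapply is_RInt_ext. 2: apply (Hi 0%nat). intros; simpl. ceq; ring.
Qed.


Ltac nzj gamma B th j :=
  pose proof (nz_gen2 (eix th) (Sg gamma j) (Cmod_eix th) (B j));
  pose proof (nz_gen2 (eix th) (- Sg gamma j) (Cmod_eix th) (eq_ind_r (fun x => x < 1) (B j) (Rabs_Ropp _)));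
  pose proof (nz_gen2 (eix (- th)) (Sg gamma j) (Cmod_eix (- th)) (B j));
  pose proof (nz_gen2 (eix (- th)) (- Sg gamma j) (Cmod_eix (- th)) (eq_ind_r (fun x => x < 1) (B j) (Rabs_Ropp _)));
  pose proof (nz_gen (eix th) (Sg gamma j) (Cmod_eix th) (B j));
  pose proof (nz_gen (eix th) (- Sg gamma j) (Cmod_eix th) (eq_ind_r (fun x => x < 1) (B j) (Rabs_Ropp _)));
  pose proof (nz_gen (eix (- th)) (Sg gamma j) (Cmod_eix (- th)) (B j));
  pose proof (nz_gen (eix (- th)) (- Sg gamma j) (Cmod_eix (- th)) (eq_ind_r (fun x => x < 1) (B j) (Rabs_Ropp _))).

Lemma Cg_nz gamma n : RtoC (Cg gamma n) <> RtoC 0.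
Proof. apply RtoC_nz. pose proof (Cg_pos gamma n). lra. Qed.

Lemma phi_up N gamma (H : Hz N gamma) (B : Hb gamma) n d :
  isC (fun th => (T N gamma (n + 1 + Z.of_nat d) th * A_n N gamma n th)%C) 0 (2*PI) (RtoC 0).
Proof.
apply (chain (fun th => eix th) (fun d th => (T N gamma (n+1+Z.of_nat d) th * A_n N gamma n th)%C)
  (fun d => Sg gamma (n+1+Z.of_nat d)) (fun d => - Sg gamma (n+1+Z.of_nat d + 1)) (- Sg gamma n) (- Sg gamma (n+1))
  ((1 + Sg gamma n * Sg gamma n) * / Cg gamma n)).
- apply good_z.
- intros; rewrite Rabs_Ropp; apply B.
- rewrite Rabs_Ropp; apply B.
- rewrite Rabs_Ropp; apply B.
- intros th. simpl Z.of_nat. rewrite Z.add_0_r. rewrite (R1 N gamma H B n th).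
  nzj gamma B th n. nzj gamma B th (n+1)%Z. pose proof (Cg_nz gamma n). pose proof (eix_nz th).
  transitivity ((T N gamma n th * A_n N gamma n th) * (eix th + RtoC (Sg gamma n)) / (1 + RtoC (- Sg gamma (n + 1)) * eix th))%C.
  { field. nzall. }
  rewrite diag by auto.
  transitivity ((brace gamma n th * (eix th + RtoC (Sg gamma n))) / RtoC (Cg gamma n) / (1 + RtoC (- Sg gamma (n + 1)) * eix th))%C.
  { field. nzall. }
  rewrite B2 by auto. rewrite RtoC_mult, RtoC_inv by (pose proof (Cg_pos gamma n); lra). field. nzall.
- intros d' th. replace (n + 1 + Z.of_nat (S d'))%Z with (n + 1 + Z.of_nat d' + 1)%Z by lia.
  rewrite (R1 N gamma H B (n + 1 + Z.of_nat d')). nzj gamma B th (n + 1 + Z.of_nat d' + 1)%Z.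
  field. nzall.
Qed.

Lemma phi_down N gamma (H : Hz N gamma) (B : Hb gamma) n d :
  isC (fun th => (T N gamma (n - 1 - Z.of_nat d) th * A_n N gamma n th)%C) 0 (2*PI) (RtoC 0).
Proof.
apply (chain (fun th => eix (- th)) (fun d th => (T N gamma (n - 1 - Z.of_nat d) th * A_n N gamma n th)%C)
  (fun d => - Sg gamma (n - 1 - Z.of_nat d)) (fun d => Sg gamma (n - 1 - Z.of_nat d - 1)) (Sg gamma n) (Sg gamma (n - 1))
  ((1 + Sg gamma n * Sg gamma n) * / Cg gamma n)).
- apply good_w.
- intros; apply B.
- apply B.
- apply B.
- intros th. simpl Z.of_nat. rewrite Z.sub_0_r. rewrite (R2 N gamma H B (n - 1) th).
  replace (n - 1 + 1)%Z with n by ring.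
  nzj gamma B th n. nzj gamma B th (n - 1)%Z. pose proof (Cg_nz gamma n). pose proof (eix_nz (- th)).
  transitivity ((T N gamma n th * A_n N gamma n th) * (eix (- th) + RtoC (- Sg gamma n)) / (1 + RtoC (Sg gamma (n - 1)) * eix (- th)))%C.
  { field. nzall. }
  rewrite diag by auto.
  transitivity ((brace gamma n th * (eix (- th) + RtoC (- Sg gamma n))) / RtoC (Cg gamma n) / (1 + RtoC (Sg gamma (n - 1)) * eix (- th)))%C.
  { field. nzall. }
  rewrite B1 by auto. rewrite RtoC_mult, RtoC_inv by (pose proof (Cg_pos gamma n); lra). field. nzall.
- intros d' th. replace (n - 1 - Z.of_nat (S d'))%Z with (n - 1 - Z.of_nat d' - 1)%Z by lia.
  rewrite (R2 N gamma H B (n - 1 - Z.of_nat d' - 1)). replace (n - 1 - Z.of_nat d' - 1 + 1)%Z with (n - 1 - Z.of_nat d')%Z by ring.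
  nzj gamma B th (n - 1 - Z.of_nat d' - 1)%Z.
  field. nzall.
Qed.

Lemma star_up N gamma (H : Hz N gamma) (B : Hb gamma) n d :
  isC (fun th => (Ts N gamma (n + 1 + Z.of_nat d) th * Astar_n N gamma n th)%C) 0 (2*PI) (RtoC 0).
Proof.
apply (chain (fun th => eix (- th)) (fun d th => (Ts N gamma (n+1+Z.of_nat d) th * Astar_n N gamma n th)%C)
  (fun d => - Sg gamma (n+1+Z.of_nat d)) (fun d => Sg gamma (n+1+Z.of_nat d + 1)) (Sg gamma n) (Sg gamma (n+1))
  ((1 + Sg gamma n * Sg gamma n) * / Cg gamma n)).
- apply good_w.
- intros; apply B.
- apply B.
- apply B.
- intros th. simpl Z.of_nat. rewrite Z.add_0_r. rewrite (R3 N gamma H B n th).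
  nzj gamma B th n. nzj gamma B th (n+1)%Z. pose proof (Cg_nz gamma n). pose proof (eix_nz (- th)).
  transitivity ((Ts N gamma n th * Astar_n N gamma n th) * (eix (- th) + RtoC (- Sg gamma n)) / (1 + RtoC (Sg gamma (n + 1)) * eix (- th)))%C.
  { field. nzall. }
  rewrite diag_s by auto.
  transitivity ((brace gamma n th * (eix (- th) + RtoC (- Sg gamma n))) / RtoC (Cg gamma n) / (1 + RtoC (Sg gamma (n + 1)) * eix (- th)))%C.
  { field. nzall. }
  rewrite B1 by auto. rewrite RtoC_mult, RtoC_inv by (pose proof (Cg_pos gamma n); lra). field. nzall.
- intros d' th. replace (n + 1 + Z.of_nat (S d'))%Z with (n + 1 + Z.of_nat d' + 1)%Z by lia.
  rewrite (R3 N gamma H B (n + 1 + Z.of_nat d')). nzj gamma B th (n + 1 + Z.of_nat d' + 1)%Z.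
  field. nzall.
Qed.

Lemma star_down N gamma (H : Hz N gamma) (B : Hb gamma) n d :
  isC (fun th => (Ts N gamma (n - 1 - Z.of_nat d) th * Astar_n N gamma n th)%C) 0 (2*PI) (RtoC 0).
Proof.
apply (chain (fun th => eix th) (fun d th => (Ts N gamma (n - 1 - Z.of_nat d) th * Astar_n N gamma n th)%C)
  (fun d => Sg gamma (n - 1 - Z.of_nat d)) (fun d => - Sg gamma (n - 1 - Z.of_nat d - 1)) (- Sg gamma n) (- Sg gamma (n - 1))
  ((1 + Sg gamma n * Sg gamma n) * / Cg gamma n)).
- apply good_z.
- intros; rewrite Rabs_Ropp; apply B.
- rewrite Rabs_Ropp; apply B.
- rewrite Rabs_Ropp; apply B.
- intros th. simpl Z.of_nat. rewrite Z.sub_0_r. rewrite (R4 N gamma H B (n - 1) th).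
  replace (n - 1 + 1)%Z with n by ring.
  nzj gamma B th n. nzj gamma B th (n - 1)%Z. pose proof (Cg_nz gamma n). pose proof (eix_nz th).
  transitivity ((Ts N gamma n th * Astar_n N gamma n th) * (eix th + RtoC (Sg gamma n)) / (1 + RtoC (- Sg gamma (n - 1)) * eix th))%C.
  { field. nzall. }
  rewrite diag_s by auto.
  transitivity ((brace gamma n th * (eix th + RtoC (Sg gamma n))) / RtoC (Cg gamma n) / (1 + RtoC (- Sg gamma (n - 1)) * eix th))%C.
  { field. nzall. }
  rewrite B2 by auto. rewrite RtoC_mult, RtoC_inv by (pose proof (Cg_pos gamma n); lra). field. nzall.
- intros d' th. replace (n - 1 - Z.of_nat (S d'))%Z with (n - 1 - Z.of_nat d' - 1)%Z by lia.
  rewrite (R4 N gamma H B (n - 1 - Z.of_nat d' - 1)). replace (n - 1 - Z.of_nat d' - 1 + 1)%Z with (n - 1 - Z.of_nat d')%Z by ring.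
  nzj gamma B th (n - 1 - Z.of_nat d' - 1)%Z.
  field. nzall.
Qed.


Lemma Q_int0 e g : Q e g -> isC g 0 (2*PI) (RtoC 0).
Proof.
intros [_ Hi]. eapply is_RInt_ext. 2: apply (Hi 0%nat). intros; simpl. ceq; ring.
Qed.

Lemma brace_int gamma (B : Hb gamma) n : isC (brace gamma n) 0 (2*PI) (RtoC (2*PI)).
Proof.
assert (I1 : isC (fun th => (RtoC (- (Sg gamma n)) * eix (- th) / (1 + RtoC (Sg gamma n) * eix (- th)))%C) 0 (2*PI) (RtoC 0)).
{ apply (Q_int0 (fun th => eix (- th))).
  apply (Q_div (fun th => eix (- th)) (fun th => (RtoC (- (Sg gamma n)) * eix (- th))%C)). apply good_w. apply B.
  apply Q_scal. apply Q_base. apply good_w. }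
assert (I2 : isC (fun th => (RtoC (Sg gamma n) * eix th / (1 + RtoC (- (Sg gamma n)) * eix th))%C) 0 (2*PI) (RtoC 0)).
{ apply (Q_int0 (fun th => eix th)).
  apply (Q_div (fun th => eix th) (fun th => (RtoC (Sg gamma n) * eix th)%C)). apply good_z. rewrite Rabs_Ropp; apply B.
  apply Q_scal. apply Q_base. apply good_z. }
assert (I0 : isC (fun _ => RtoC 1) 0 (2*PI) (RtoC (2*PI))).
{ eapply is_RInt_eq_l. apply (is_RInt_const (V:=C_R_CompleteNormedModule)). rewrite scal_C.
  rewrite Rminus_0_r. ceq. rewrite Cmult_1_r. reflexivity. }
eapply is_RInt_ext. 2: eapply is_RInt_eq_l. 2: apply (isC_plus _ _ _ _ _ _ (isC_plus _ _ _ _ _ _ I0 I1) I2).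
- intros th _. unfold brace. nzj gamma B th n. pose proof (eix_nz th). pose proof (eix_nz (- th)).
  cbv beta. ceq. repeat rewrite RtoC_opp in *. field. nzall.
- ceq. ring.
Qed.

Lemma phi_fact N gamma k n th :
  Cmult (Cmult (phi_coef N gamma k th) (A_n N gamma n th)) (RtoC (/ (2 * PI))) =
  (RtoC (Cg gamma k * / (2 * PI)) * (T N gamma k th * A_n N gamma n th))%C.
Proof. unfold phi_coef, T. rewrite RtoC_mult. ring. Qed.
Lemma star_fact N gamma k n th :
  Cmult (Cmult (phistar_coef N gamma k th) (Astar_n N gamma n th)) (RtoC (/ (2 * PI))) =
  (RtoC (Cg gamma k * / (2 * PI)) * (Ts N gamma k th * Astar_n N gamma n th))%C.
Proof. unfold phistar_coef, Ts. rewrite RtoC_mult. ring. Qed.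

Lemma fin0 (f g : R -> C) c : isC f 0 (2*PI) (RtoC 0) -> (forall th, g th = (RtoC c * f th)%C) -> isC g 0 (2*PI) (RtoC 0).
Proof.
intros I E. eapply is_RInt_ext. 2: eapply is_RInt_eq_l. 2: apply (isC_scal _ _ _ _ c I).
intros; rewrite E; reflexivity. ceq; ring.
Qed.

Lemma diag_int gamma (B : Hb gamma) n (f : R -> C) (D : Z -> R -> C) :
  (forall th, (D n th * 1)%C = (brace gamma n th / RtoC (Cg gamma n))%C) ->
  (forall th, f th = (RtoC (Cg gamma n * / (2 * PI)) * (D n th * 1))%C) ->
  isC f 0 (2*PI) (RtoC 1).
Proof.
intros Hd E. eapply is_RInt_ext. 2: eapply is_RInt_eq_l. 2: apply (isC_scal _ _ _ _ (/ (2*PI)) (brace_int gamma B n)).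
- intros th _. rewrite E, Hd. rewrite RtoC_mult. ceq. pose proof (Cg_nz gamma n). field. nzall.
- rewrite <- RtoC_mult. rewrite Rinv_l. reflexivity. pose proof PI_RGT_0. lra.
Qed.

Theorem propositionF3 (N : Z) (gamma : Z -> R)
  (Hpos : forall j : Z, 0 <= gamma j)
  (HS : forall j : Z, sinh (gamma j) < 1)
  (Hsupp : forall j : Z, (N < Z.abs j)%Z -> gamma j = 0) :
  forall n k : Z,
    is_RInt (V := C_R_CompleteNormedModule)
      (fun th => Cmult (Cmult (phi_coef N gamma k th) (A_n N gamma n th))
                       (RtoC (/ (2 * PI))))
      0 (2 * PI) (if Z.eqb k n then RtoC 1 else RtoC 0)
    /\
    is_RInt (V := C_R_CompleteNormedModule)
      (fun th => Cmult (Cmult (phistar_coef N gamma k th) (Astar_n N gamma n th))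
                       (RtoC (/ (2 * PI))))
      0 (2 * PI) (if Z.eqb k n then RtoC 1 else RtoC 0).
Proof.
intros n k.
assert (H : Hz N gamma) by (intros j Hj; apply (Szero N gamma Hsupp); auto).
assert (B : Hb gamma) by (intros j; apply Sbound; auto).
destruct (Z.eqb_spec k n) as [E|E].
- subst k. split.
  + apply (diag_int gamma B n _ (fun k th => (T N gamma k th * A_n N gamma n th)%C)).
    intros th. rewrite Cmult_1_r. apply diag; auto.
    intros th. rewrite Cmult_1_r. apply phi_fact.
  + apply (diag_int gamma B n _ (fun k th => (Ts N gamma k th * Astar_n N gamma n th)%C)).
    intros th. rewrite Cmult_1_r. apply diag_s; auto.
    intros th. rewrite Cmult_1_r. apply star_fact.
- destruct (Z_lt_le_dec n k) as [L|L].
  + set (d := Z.to_nat (k - n - 1)).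
    assert (Ek : k = (n + 1 + Z.of_nat d)%Z) by (unfold d; rewrite Z2Nat.id; lia).
    split.
    * eapply fin0. 2: intros; apply phi_fact. rewrite Ek. apply phi_up; auto.
    * eapply fin0. 2: intros; apply star_fact. rewrite Ek. apply star_up; auto.
  + set (d := Z.to_nat (n - 1 - k)).
    assert (Ek : k = (n - 1 - Z.of_nat d)%Z) by (unfold d; rewrite Z2Nat.id; lia).
    split.
    * eapply fin0. 2: intros; apply phi_fact. rewrite Ek. apply phi_down; auto.
    * eapply fin0. 2: intros; apply star_fact. rewrite Ek. apply star_down; auto.
Qed.
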